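(* Let $T:\mathcal{M}_k\to\mathcal{M}_k$ be a completely positive map that is self-adjoint with respect to the trace inner product. Then $T$ is completely reducible if and only if for every orthogonal projection $W\in\mathcal{M}_k$ with $T(W\mathcal{M}_kW)\subseteq W\mathcal{M}_kW$ we have $T|_{W\mathcal{M}_kW^\perp+W^\perp\mathcal{M}_kW}\equiv0$.
   Context: $\mathcal{M}_k$ denotes the complex $k\times k$ matrices. For an orthogonal projection $W$, $W^\perp=\mathrm{Id}-W$; for orthogonal projections $V,W$, $V\mathcal{M}_kW=\{VXW:X\in\mathcal{M}_k\}$. A linear map $T:\mathcal{M}_k\to\mathcal{M}_k$ is completely positive if $T(X)=\sum_iR_iXR_i^*$ for some $R_i\in\mathcal{M}_k$; it is positive if it maps positive semidefinite matrices to positive semidefinite matrices, and self-adjoint if self-adjoint with respect to $\langle X,Y\rangle=\mathrm{tr}(XY^* )$. Given an orthogonal projection $V$ and a positive map $T:V\mathcal{M}_kV\to V\mathcal{M}_kV$, $T$ is irreducible if the only orthogonal projections $W$ with $W\mathcal{M}_kW\subseteq V\mathcal{M}_kV$ and $T(W\mathcal{M}_kW)\subseteq W\mathcal{M}_kW$ are $W=0$ and $W=V$. A self-adjoint positive map $T:\mathcal{M}_k\to\mathcal{M}_k$ is completely reducible if there are orthogonal projections $W_1,\dots,W_l$ with $W_iW_j=0$ for $i\ne j$, $T(W_i\mathcal{M}_kW_i)\subseteq W_i\mathcal{M}_kW_i$ and $T|_{W_i\mathcal{M}_kW_i}$ irreducible for every $i$, and $T|_R\equiv0$, where $R$ is the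 orthogonal complement (trace inner product) of $\bigoplus_iW_i\mathcal{M}_kW_i$ in $\mathcal{M}_k$. *)

(* Defs.v *)
From HB Require Import structures.
From mathcomp Require Import all_boot all_order all_algebra.
From mathcomp Require Import complex reals.
Set Implicit Arguments. Unset Strict Implicit. Unset Printing Implicit Defensive.
Import Order.TTheory GRing.Theory Num.Theory.
Local Open Scope ring_scope.

Section Defs.
Variable R : realType.
Local Notation C := (R[i]).
Variable k : nat.
Local Notation M := ('M[C]_k).

Definition adjmx (A : M) : M := (map_mx Num.conj A)^T.

Definition is_orth_proj (W : M) : Prop := W *m W = W /\ adjmx W = W.

Definition perp (W : M) : M := 1%:M - W.

Definition completely_positive (T : M -> M) : Prop :=
  exists (n : nat) (Rs : 'I_n -> M),
    forall X : M, T X = \sum_(i < n) Rs i *m X *m adjmx (Rs i).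

Definition trace_selfadjoint (T : M -> M) : Prop :=
  forall X Y : M, \tr (T X *m adjmx Y) = \tr (X *m adjmx (T Y)).

Definition maps_into (T : M -> M) (V W V' W' : M) : Prop :=
  forall X : M, exists Y : M, T (V *m X *m W) = V' *m Y *m W'.

Definition corner_sub (V W V' W' : M) : Prop :=
  forall X : M, exists Y : M, V *m X *m W = V' *m Y *m W'.

Definition irreducible_on (T : M -> M) (V : M) : Prop :=
  forall W : M, is_orth_proj W -> corner_sub W W V V ->
    maps_into T W W W W -> W = 0 \/ W = V.

Definition completely_reducible (T : M -> M) : Prop :=
  exists (l : nat) (Ws : 'I_l -> M),
    [/\ (forall i, is_orth_proj (Ws i)),
        (forall i j, i != j -> Ws i *m Ws j = 0),
        (forall i, maps_into T (Ws i) (Ws i) (Ws i) (Ws i)),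
        (forall i, irreducible_on T (Ws i)) &
        (* T vanishes on the trace-orthogonal complement of (+)_i W_i M_k W_i *)
        (forall X : M,
           (forall i (Y : M), \tr (X *m adjmx (Ws i *m Y *m Ws i)) = 0) ->
           T X = 0)].
End Defs.

(* Main.v *)
Require Import Defs.
From HB Require Import structures.
From mathcomp Require Import all_boot all_order all_algebra.
From mathcomp Require Import complex reals.
From Stdlib Require Import Classical FunctionalExtensionality.
Import Order.TTheory GRing.Theory Num.Theory.
Set Implicit Arguments. Unset Strict Implicit. Unset Printing Implicit Defensive.
Local Open Scope ring_scope.

Section Basics.
Variables (R : realType) (k : nat).
Local Notation C := (R[i]).
Local Notation M := ('M[C]_k).
Implicit Types (A B X Y P Q W : M).
Local Notation adj := (@adjmx R k).

Lemma adjmxE A : adj A = (A ^t* )%sesqui.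
Proof. by rewrite /adjmx map_trmx. Qed.

Lemma adjmxK A : adj (adj A) = A.
Proof. by rewrite !adjmxE trmxCK. Qed.

Lemma adjmxM A B : adj (A *m B) = adj B *m adj A.
Proof. by rewrite /adjmx map_mxM trmx_mul. Qed.

Lemma adjmxD A B : adj (A + B) = adj A + adj B.
Proof. by rewrite /adjmx map_mxD linearD. Qed.

Lemma adjmxN A : adj (- A) = - adj A.
Proof. by rewrite /adjmx map_mxN linearN. Qed.

Lemma adjmxB A B : adj (A - B) = adj A - adj B.
Proof. by rewrite adjmxD adjmxN. Qed.

Lemma adjmx0 : adj 0 = 0.
Proof. by rewrite /adjmx map_mx0 trmx0. Qed.

Lemma adjmx1 : adj 1%:M = 1%:M.
Proof. by rewrite /adjmx map_mx1 trmx1. Qed.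

Lemma adjmxZ (a : C) A : adj (a *: A) = a^* *: adj A.
Proof. by apply/matrixP => i j; rewrite !mxE rmorphM. Qed.

Lemma adjmx_sum (I : finType) (F : I -> M) : adj (\sum_i F i) = \sum_i adj (F i).
Proof.
apply/matrixP => i j; rewrite !mxE !summxE rmorph_sum; apply: eq_bigr => l _.
by rewrite !mxE.
Qed.

Lemma tr_adj_ge0 B : 0 <= \tr (B *m adj B).
Proof.
rewrite /mxtrace; apply: sumr_ge0 => i _; rewrite !mxE; apply: sumr_ge0 => j _.
by rewrite !mxE -normCK exprn_ge0.
Qed.

Lemma tr_adj_eq0 B : \tr (B *m adj B) = 0 -> B = 0.
Proof.
move=> H; apply/matrixP => i j; rewrite mxE.
have Hd : forall l, 0 <= (B *m adj B) l l.
  move=> l; rewrite !mxE; apply: sumr_ge0 => j' _.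
  by rewrite !mxE -normCK exprn_ge0.
have Hi0 := @psumr_eq0P _ _ xpredT (fun l => (B *m adj B) l l) (fun l _ => Hd l) H i isT.
have Hi : \sum_j (B i j * (B i j)^* ) = (B *m adj B) i i.
  rewrite mxE; apply: eq_bigr => l _; by rewrite !mxE.
have Hp : forall l, xpredT l -> 0 <= B i l * (B i l)^*.
  by move=> l _; rewrite -normCK exprn_ge0.
rewrite Hi0 in Hi.
have Hj := @psumr_eq0P _ _ xpredT (fun j => B i j * (B i j)^* ) Hp Hi j isT.
by move: Hj => /=; rewrite -normCK => /eqP; rewrite sqrf_eq0 normr_eq0 => /eqP.
Qed.

Lemma sum_tr_adj_eq0 n (Bs : 'I_n -> M) :
  \sum_i \tr (Bs i *m adj (Bs i)) = 0 -> forall i, Bs i = 0.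
Proof.
move=> H i; apply: tr_adj_eq0.
exact: (@psumr_eq0P _ _ xpredT _ (fun l _ => tr_adj_ge0 (Bs l)) H i isT).
Qed.

End Basics.

Section Kraus.
Variables (R : realType) (k : nat).
Local Notation C := (R[i]).
Local Notation M := ('M[C]_k).
Implicit Types (A B X Y P Q W F G : M).
Local Notation adj := (@adjmx R k).
Variables (n : nat) (Rs : 'I_n -> M).

Definition Kr X : M := \sum_i Rs i *m X *m adj (Rs i).

Lemma KrD X Y : Kr (X + Y) = Kr X + Kr Y.
Proof. by rewrite /Kr -big_split; apply: eq_bigr => i _; rewrite mulmxDr mulmxDl. Qed.

Lemma KrN X : Kr (- X) = - Kr X.
Proof. by rewrite /Kr -sumrN; apply: eq_bigr => i _; rewrite mulmxN mulNmx. Qed.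

Lemma KrB X Y : Kr (X - Y) = Kr X - Kr Y.
Proof. by rewrite KrD KrN. Qed.

Lemma Kr0 : Kr 0 = 0.
Proof. by rewrite /Kr big1 // => i _; rewrite mulmx0 mul0mx. Qed.

Lemma Kr_sum (I : finType) (Fs : I -> M) : Kr (\sum_j Fs j) = \sum_j Kr (Fs j).
Proof.
rewrite /Kr exchange_big /=; apply: eq_bigr => i _.
by rewrite mulmx_sumr mulmx_suml.
Qed.

Lemma Kr_adj X : adj (Kr X) = Kr (adj X).
Proof.
rewrite /Kr adjmx_sum; apply: eq_bigr => i _.
by rewrite !adjmxM adjmxK mulmxA.
Qed.

Definition commR F := forall i, Rs i *m F = F *m Rs i.

Lemma commR_adjR F : commR (adj F) -> forall i, adj (Rs i) *m F = F *m adj (Rs i).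
Proof.
move=> H i; have := congr1 adj (H i); rewrite !adjmxM adjmxK => ->. done.
Qed.

Lemma KrML F X : commR F -> commR (adj F) -> Kr (F *m X) = F *m Kr X.
Proof.
move=> H1 H2; rewrite /Kr mulmx_sumr; apply: eq_bigr => i _.
by rewrite !mulmxA H1.
Qed.

Lemma KrMR F X : commR F -> commR (adj F) -> Kr (X *m F) = Kr X *m F.
Proof.
move=> H1 H2; rewrite /Kr mulmx_suml; apply: eq_bigr => i _.
by rewrite -!mulmxA commR_adjR.
Qed.

Lemma commR1 : commR 1%:M.
Proof. by move=> i; rewrite mulmx1 mul1mx. Qed.

Lemma commR0 : commR 0.
Proof. by move=> i; rewrite mulmx0 mul0mx. Qed.

Lemma commRD F G : commR F -> commR G -> commR (F + G).
Proof. by move=> H1 H2 i; rewrite mulmxDr mulmxDl H1 H2. Qed.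

Lemma commRN F : commR F -> commR (- F).
Proof. by move=> H1 i; rewrite mulmxN mulNmx H1. Qed.

Lemma commRB F G : commR F -> commR G -> commR (F - G).
Proof. by move=> H1 H2; apply: commRD => //; apply: commRN. Qed.

Lemma commRM F G : commR F -> commR G -> commR (F *m G).
Proof. by move=> H1 H2 i; rewrite mulmxA H1 -!mulmxA H2. Qed.

Lemma commRZ (a : C) F : commR F -> commR (a *: F).
Proof. by move=> H1 i; rewrite -scalemxAr -scalemxAl H1. Qed.

Lemma tr_sandwich F X :
  \tr (F *m Kr (X *m adj X) *m adj F) =
  \sum_i \tr ((F *m Rs i *m X) *m adj (F *m Rs i *m X)).
Proof.
rewrite /Kr mulmx_sumr mulmx_suml raddf_sum /=; apply: eq_bigr => i _.
by rewrite !adjmxM !mulmxA.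
Qed.

Lemma orth_perp P : is_orth_proj P ->
  [/\ P *m perp P = 0, perp P *m P = 0, adj (perp P) = perp P & perp P *m perp P = perp P].
Proof.
case=> PP Pa; rewrite /perp; split.
- by rewrite mulmxBr mulmx1 PP subrr.
- by rewrite mulmxBl mul1mx PP subrr.
- by rewrite adjmxB adjmx1 Pa.
- by rewrite mulmxBr mulmx1 !mulmxBl mul1mx PP subrr subr0.
Qed.

Hypothesis Hsa : trace_selfadjoint Kr.

Lemma inv_comm P : is_orth_proj P -> maps_into Kr P P P P -> commR P.
Proof.
move=> HP Hm; have [PP Pa] := HP.
have [PQ QP Qa QQ] := orth_perp HP.
set Q := perp P in PQ QP Qa QQ.
have [Y HY] := Hm 1%:M; rewrite mulmx1 PP in HY.
have PaP : P *m adj P = P by rewrite Pa PP.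
have QaQ : Q *m adj Q = Q by rewrite Qa QQ.
have B1 : forall i, Q *m Rs i *m P = 0.
  apply: sum_tr_adj_eq0; rewrite -tr_sandwich PaP HY Qa.
  by rewrite -!mulmxA PQ !mulmx0 linear0.
have B2 : forall i, P *m Rs i *m Q = 0.
  apply: sum_tr_adj_eq0; rewrite -tr_sandwich QaQ Pa.
  have := Hsa P Q; rewrite HY Qa -!mulmxA PQ !mulmx0 linear0 Kr_adj Qa.
  move=> /esym H; rewrite mxtrace_mulC -mulmxA PP mxtrace_mulC.
  exact: H.
move=> i.
have E1 : Rs i *m P = P *m Rs i *m P.
  have := B1 i; rewrite /Q /perp mulmxBl mul1mx mulmxBl => /eqP.
  by rewrite subr_eq0 => /eqP.
have E2 : P *m Rs i = P *m Rs i *m P.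
  have := B2 i; rewrite /Q /perp mulmxBr mulmx1 => /eqP.
  by rewrite subr_eq0 => /eqP.
by rewrite E1 -E2.
Qed.

Lemma comm_inv P : is_orth_proj P -> commR P -> maps_into Kr P P P P.
Proof.
move=> [PP Pa] H X; exists (Kr X).
by rewrite KrMR ?Pa // KrML ?Pa.
Qed.

End Kraus.

Section Spec.
Variables (R : realType) (k : nat).
Local Notation C := (R[i]).
Local Notation M := ('M[C]_k).
Implicit Types (A B X Y P Q W F G N Z : M).
Local Notation adj := (@adjmx R k).

Lemma adj_diag (d : 'rV[C]_k) : adj (diag_mx d) = diag_mx (\row_j (d 0 j)^* ).
Proof.
apply/matrixP => i j; rewrite !mxE.
by case: (eqVneq i j) => [->|/negPf nij]; rewrite ?eqxx ?nij ?mulr1n ?mulr0n ?rmorph0 // eq_sym nij mulr0n rmorph0.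
Qed.

Lemma normal_proj N : N *m adj N = adj N *m N ->
  exists E G, [/\ is_orth_proj E, E = N *m G, E = G *m N & N *m E = N].
Proof.
move=> HN.
have Nn : N \is normalmx by apply/normalmxP; rewrite -!adjmxE.
have NE := orthomx_spectralP Nn.
set U := spectralmx N in NE; set d := spectral_diag N in NE.
have Uu : U \is unitarymx by apply: spectral_unitarymx.
have Uunit : U \in unitmx by apply: unitarymx_unit.
have iU : invmx U = adj U by rewrite invmx_unitary // adjmxE.
have UiU : U *m invmx U = 1%:M by rewrite mulmxV.
have Phi : forall D1 D2 : M, (invmx U *m D1 *m U) *m (invmx U *m D2 *m U) = invmx U *m (D1 *m D2) *m U.
  by move=> D1 D2; rewrite -!mulmxA (mulmxA U) UiU mul1mx.
set dinv := \row_j (d 0 j)^-1.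
set e := \row_j (d 0 j * (d 0 j)^-1).
exists (invmx U *m diag_mx e *m U), (invmx U *m diag_mx dinv *m U).
have He : forall j, e 0 j = 0 \/ e 0 j = 1.
  move=> j; rewrite /e mxE; have [->|nz] := eqVneq (d 0 j) 0.
    by left; rewrite mul0r.
  by right; rewrite mulfV.
split.
- split.
  + rewrite Phi mulmx_diag; congr (_ *m diag_mx _ *m _); apply/rowP => j.
    by rewrite mxE; case: (He j) => ->; rewrite ?mulr0 ?mulr1.
  + rewrite !adjmxM iU adjmxK adj_diag mulmxA; congr (_ *m diag_mx _ *m _).
    apply/rowP => j; rewrite mxE.
    by case: (He j) => ->; rewrite ?rmorph0 ?rmorph1.
- rewrite NE Phi mulmx_diag; congr (_ *m diag_mx _ *m _); apply/rowP => j.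
  by rewrite !mxE.
- rewrite NE Phi mulmx_diag; congr (_ *m diag_mx _ *m _); apply/rowP => j.
  by rewrite !mxE mulrC.
- rewrite {1}NE Phi mulmx_diag {1}NE; congr (_ *m diag_mx _ *m _); apply/rowP => j.
  rewrite !mxE; have [->|nz] := eqVneq (d 0 j) 0; first by rewrite mul0r.
  by rewrite mulfV // mulr1.
Qed.

Lemma eigen_row Z W : adj Z = Z -> W *m W = W -> W *m Z = Z -> Z *m W = Z -> W != 0 ->
  exists (l : C) (v : 'rV[C]_k), [/\ v != 0, v *m W = v & v *m Z = l *: v].
Proof.
move=> Za WW WZ ZW Wn0.
have Zn : Z \is normalmx by apply/normalmxP; rewrite -!adjmxE Za.
have ZE := orthomx_spectralP Zn.
set U := spectralmx Z in ZE; set d := spectral_diag Z in ZE.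
have Uunit : U \in unitmx by apply/unitarymx_unit/spectral_unitarymx.
have UZ : U *m Z = diag_mx d *m U by rewrite ZE !mulmxA mulmxV // mul1mx.
have UW : U *m W != 0.
  apply: contraNneq Wn0 => H.
  by rewrite -[W]mul1mx -(mulVmx Uunit) -mulmxA H mulmx0.
have [j Hj] : exists j, row j (U *m W) != 0.
  apply/existsP; rewrite -negb_forall; apply: contra UW => /forallP H.
  by apply/eqP/row_matrixP => j; rewrite row0; apply/eqP/H.
exists (d 0 j), (row j U *m W); split.
- by rewrite -row_mul.
- by rewrite -mulmxA WW.
- have Hu : row j U *m Z = d 0 j *: row j U.
    by rewrite -row_mul UZ row_mul row_diag_mx -scalemxAl -rowE.
  rewrite -mulmxA WZ Hu.
  have := congr1 (mulmx^~ W) Hu; rewrite -mulmxA ZW Hu => ->.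
  by rewrite scalemxAl.
Qed.

End Spec.


Section Main.
Variables (R : realType) (k : nat).
Local Notation C := (R[i]).
Local Notation M := ('M[C]_k).
Implicit Types (A B X Y P Q W F G N Z E : M).
Local Notation adj := (@adjmx R k).
Variables (n : nat) (Rs : 'I_n -> M).
Local Notation Kr := (Kr Rs).
Local Notation commR := (commR Rs).
Hypothesis Hsa : trace_selfadjoint Kr.

Lemma swap4 (V : zmodType) (a b c d : V) : a - b - (c - d) = a - c - (b - d).
Proof. by rewrite !opprB !addrA (addrAC a (- b)) (addrAC a (- c)) (addrAC (a + d)). Qed.

Lemma commR_adj_herm F : adj F = F -> commR F -> commR (adj F).
Proof. by move=> ->. Qed.

Lemma irr_scalar W Z : is_orth_proj W -> irreducible_on Kr W -> commR W ->
  commR Z -> adj Z = Z -> W *m Z = Z -> Z *m W = Z -> exists l : C, Z = l *: W.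
Proof.
move=> HW Hirr cW cZ Za WZ ZW; have [WW Wa] := HW.
case: (eqVneq W 0) => [W0|Wn0].
  by exists 0; rewrite scale0r -ZW W0 mulmx0.
have [l [v [vn0 vW vZ]]] := eigen_row Za WW WZ ZW Wn0.
set N := Z - l *: W.
have Na : adj N = Z - l^* *: W by rewrite /N adjmxB adjmxZ Za Wa.
have NW : N *m W = N by rewrite /N mulmxBl -scalemxAl WW ZW.
have WN : W *m N = N by rewrite /N mulmxBr -scalemxAr WW WZ.
have Nn : N *m adj N = adj N *m N.
  rewrite Na /N !mulmxBl !mulmxBr -!scalemxAl -!scalemxAr WZ ZW WW !scalerA mulrC.
  exact: swap4.
have [E [G [HE EG GE NE]]] := normal_proj Nn.
have [EE Ea] := HE.
have EN : E *m N = N by rewrite {1}EG -mulmxA -GE.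
have cN : commR N by apply: commRB => //; apply: commRZ.
have cNa : commR (adj N) by rewrite Na; apply: commRB => //; apply: commRZ.
have cE : commR E.
  move=> i.
  have H1 : Rs i *m E = E *m Rs i *m E.
    by rewrite {1 3}EG !mulmxA cN -(mulmxA E) cN mulmxA EN.
  have H2 : adj (Rs i) *m E = E *m adj (Rs i) *m E.
    by rewrite {1 3}EG !mulmxA (commR_adjR cNa) -(mulmxA E) (commR_adjR cNa) mulmxA EN.
  have H3 := congr1 adj H2; rewrite !adjmxM adjmxK Ea mulmxA in H3.
  by rewrite H1 -H3.
have EW : E *m W = E by rewrite {1 2}GE -mulmxA NW.
have WE : W *m E = E by rewrite {1 2}EG mulmxA WN.
have := Hirr E HE _ (comm_inv HE cE).
case.
- by move=> X; exists (E *m X *m E); rewrite !mulmxA WE -!mulmxA EW.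
- move=> E0; exists l; apply/eqP; rewrite -subr_eq0; apply/eqP.
  by rewrite -/N -NE E0 mulmx0.
- move=> EWe; exfalso; move/negP: vn0; apply; apply/eqP.
  rewrite -vW -EWe EG mulmxA /N mulmxBr vZ -scalemxAr vW subrr mul0mx.
  done.
Qed.

End Main.


Section Main2.
Variables (R : realType) (k : nat).
Local Notation C := (R[i]).
Local Notation M := ('M[C]_k).
Implicit Types (A B X Y P Q W F G N Z E : M).
Local Notation adj := (@adjmx R k).
Variables (n : nat) (Rs : 'I_n -> M).
Local Notation Kr := (Kr Rs).
Local Notation commR := (commR Rs).
Hypothesis Hsa : trace_selfadjoint Kr.
Variables (l : nat) (Ws : 'I_l -> M).
Hypotheses (Hproj : forall i, is_orth_proj (Ws i))
  (Horth : forall i j, i != j -> Ws i *m Ws j = 0)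
  (Hmaps : forall i, maps_into Kr (Ws i) (Ws i) (Ws i) (Ws i))
  (Hirr : forall i, irreducible_on Kr (Ws i))
  (Hcomp : forall X : M,
           (forall i (Y : M), \tr (X *m adj (Ws i *m Y *m Ws i)) = 0) ->
           Kr X = 0).

Lemma tr_corner W X Y : is_orth_proj W ->
  \tr (X *m adj (W *m Y *m W)) = \tr ((W *m X *m W) *m adj Y).
Proof.
move=> [WW Wa]; rewrite !adjmxM Wa.
rewrite !mulmxA mxtrace_mulC !mulmxA.
by rewrite -[X in \tr (X *m _ *m _ *m _)]WW -!mulmxA mxtrace_mulC !mulmxA.
Qed.

Lemma vanish X : (forall j, Ws j *m X *m Ws j = 0) -> Kr X = 0.
Proof.
move=> H; apply: Hcomp => i Y; rewrite tr_corner // H mul0mx.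
by rewrite linear0.
Qed.

Lemma Kr_dec X : Kr X = \sum_i Kr (Ws i *m X *m Ws i).
Proof.
apply/eqP; rewrite -subr_eq0 -Kr_sum -KrB; apply/eqP; apply: vanish => j.
rewrite mulmxBr mulmxBl mulmx_sumr mulmx_suml (bigD1 j) //= big1.
  have [WW _] := Hproj j.
  by rewrite addr0 !mulmxA WW -!mulmxA WW subrr.
move=> i nij; rewrite !mulmxA Horth ?mul0mx ?mul0mx //.
by rewrite eq_sym.
Qed.

Lemma commW i : commR (Ws i).
Proof. have H := Hproj i. have H2 := Hmaps i. Check (inv_comm Hsa H H2). exact: (inv_comm Hsa H H2). Qed.

Lemma block_zero P i A : is_orth_proj P -> commR P ->
  P *m Kr (Ws i *m A *m Ws i) *m perp P = 0.
Proof.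
move=> HP cP; have [PP Pa] := HP.
set W := Ws i; have HW := Hproj i; have [WW Wa] := HW.
have cW := commW i.
have [_ _ Qa QQ] := orth_perp HW.
have cQ : commR (perp W) by apply: commRB => //; apply: commR1.
set Z := W *m P *m W; set F := perp W *m P *m W.
have cZ : commR Z by apply: commRM => //; apply: commRM.
have cF : commR F by apply: commRM => //; apply: commRM.
have Za : adj Z = Z by rewrite /Z !adjmxM Wa Pa mulmxA.
have Fa : adj F = W *m P *m perp W by rewrite /F !adjmxM Wa Pa Qa mulmxA.
have cFa : commR (adj F) by rewrite Fa; apply: commRM => //; apply: commRM.
have WZ : W *m Z = Z by rewrite /Z !mulmxA WW.
have ZW : Z *m W = Z by rewrite /Z -mulmxA WW.
have WT : forall A', W *m Kr (W *m A' *m W) = Kr (W *m A' *m W).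
  by move=> A'; rewrite -KrML ?Wa // !mulmxA WW.
have TW : forall A', Kr (W *m A' *m W) *m W = Kr (W *m A' *m W).
  by move=> A'; rewrite -KrMR ?Wa // -mulmxA WW.
have FT : forall A', F *m Kr (W *m A' *m W) = 0.
  move=> A'; rewrite -KrML //.
  have -> : F *m (W *m A' *m W) = perp W *m (P *m W *m W *m A') *m W.
    by rewrite /F !mulmxA.
  by apply: vanish => j; rewrite /perp; case: (eqVneq i j) => [<-|nij];
    [rewrite -/W !mulmxA mulmxBr mulmx1 WW subrr !mul0mx
    | rewrite -!mulmxA (Horth nij) !mulmx0].
have PT : forall A', P *m Kr (W *m A' *m W) = Z *m Kr (W *m A' *m W).
  move=> A'; rewrite -{1}WT mulmxA.
  have -> : P *m W = Z + F by rewrite /Z /F -!mulmxDl /perp addrC subrK mul1mx.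
  by rewrite mulmxDl FT addr0.
have TP : forall A', Kr (W *m A' *m W) *m P = Kr (W *m A' *m W) *m Z.
  move=> A'; apply: (can_inj (@adjmxK R k)); rewrite [LHS]adjmxM [RHS]adjmxM Pa Za Kr_adj.
  by rewrite !adjmxM Wa mulmxA PT.
have [lam HZ] := irr_scalar HW (@Hirr i) cW cZ Za WZ ZW.
have PPr : forall X, P *m (P *m X) = P *m X by move=> X; rewrite mulmxA PP.
have WWr : forall X, W *m (W *m X) = W *m X by move=> X; rewrite mulmxA WW.
have ZZ : adj F *m F = Z - Z *m Z.
  rewrite Fa /F /Z /perp -!mulmxA !mulmxBl !mul1mx !mulmxBr.
  by rewrite !PPr !WWr subrr subr0.
set T := Kr (W *m A *m W).
have H0 : (lam - lam * lam) *: T = 0.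
  have := congr1 (mulmx^~ T) ZZ => /=.
  move=> H; rewrite -mulmxA FT mulmx0 HZ in H; move: H => /esym.
  rewrite -scalemxAl -scalemxAr scalerA WW -scalerBl -scalemxAl /T WT.
  done.
rewrite /perp mulmxBr mulmx1 -mulmxA (TP A) mulmxA (PT A) HZ.
rewrite -!scalemxAl -scalemxAr (WT A) (TW A) scalerA -scalerBl.
exact: H0.
Qed.

Lemma fwd P A B : is_orth_proj P -> maps_into Kr P P P P ->
  Kr (P *m A *m perp P + perp P *m B *m P) = 0.
Proof.
move=> HP Hm; have cP := inv_comm Hsa HP Hm; have [PP Pa] := HP.
have [_ _ Qa QQ] := orth_perp HP.
have cQ : commR (perp P) by apply: commRB => //; apply: commR1.
have cPa : commR (adj P) by rewrite Pa.
have cQa : commR (adj (perp P)) by rewrite Qa.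
have Hgen : forall A', Kr (P *m A' *m perp P) = 0.
  move=> A'; rewrite KrMR // KrML // (Kr_dec A') mulmx_sumr mulmx_suml big1 // => i _.
  exact: block_zero.
rewrite KrD Hgen add0r.
apply: (can_inj (@adjmxK R k)); rewrite Kr_adj adjmx0 !adjmxM Pa Qa mulmxA.
exact: Hgen.
Qed.

End Main2.


Section Back.
Variables (R : realType) (k : nat).
Local Notation C := (R[i]).
Local Notation M := ('M[C]_k).
Implicit Types (A B X Y P Q W V F G N Z E : M).
Local Notation adj := (@adjmx R k).
Variables (n : nat) (Rs : 'I_n -> M).
Local Notation Kr := (Kr Rs).
Local Notation commR := (commR Rs).
Hypothesis Hsa : trace_selfadjoint Kr.

Definition invP W := is_orth_proj W /\ commR W.

Lemma rank_lt W V : is_orth_proj W -> W *m V = W -> V *m W = W -> W != V ->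
  (\rank W < \rank V)%N.
Proof.
move=> [WW _] WV VW neq.
have sub : (W <= V)%MS by rewrite -WV submxMl.
have [le eqC] := mxrank_leqif_eq sub.
rewrite ltn_neqAle le andbT eqC.
apply: contraNN neq => /andP [_ /submxP [X HX]].
have E : V *m W = V by rewrite HX -mulmxA WW.
by rewrite -E VW.
Qed.

Lemma find_irr m : forall W, (\rank W < m)%N -> invP W -> W != 0 ->
  exists W0, [/\ invP W0, W0 != 0, W0 *m W = W0, W *m W0 = W0 & irreducible_on Kr W0].
Proof.
elim: m => [//|m IH] W Hr HW Wn0.
have [[WW Wa] cW] := HW.
case: (classic (irreducible_on Kr W)) => Hirr.
  by exists W; split.
have [W' HW'] := not_all_ex_not _ _ Hirr.
have [h1 HW1] := imply_to_and _ _ HW'.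
have [h2 HW2] := imply_to_and _ _ HW1.
have [h3 h4] := imply_to_and _ _ HW2.
have [Y HY] := h2 1%:M; rewrite mulmx1 (proj1 h1) in HY.
have W'W : W' *m W = W' by rewrite HY -mulmxA WW.
have WW' : W *m W' = W' by rewrite HY !mulmxA WW.
have cW' := inv_comm Hsa h1 h3.
have W'n0 : W' != 0 by apply/eqP => E; apply: h4; left.
have W'nW : W' != W by apply/eqP => E; apply: h4; right.
have Hr' : (\rank W' < m)%N.
  by rewrite -ltnS; apply: leq_trans Hr; apply: rank_lt.
have [W0 [H0 H0n H0a H0b H0irr]] := IH W' Hr' (conj h1 cW') W'n0.
exists W0; split => //.
- by rewrite -H0a -mulmxA W'W.
- by rewrite -H0b mulmxA WW'.
Qed.

Lemma decomp m : forall V, (\rank V < m)%N -> invP V ->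
  exists s : seq M,
  [/\ (forall i, (i < size s)%N -> invP (nth 0 s i) /\ irreducible_on Kr (nth 0 s i)),
      (forall i j, (i < size s)%N -> (j < size s)%N -> i != j -> nth 0 s i *m nth 0 s j = 0),
      (forall i, (i < size s)%N -> nth 0 s i *m V = nth 0 s i) &
      \sum_(x <- s) x = V].
Proof.
elim: m => [//|m IH] V Hr HV.
case: (eqVneq V 0) => [V0|Vn0].
  by exists [::]; split => //; rewrite big_nil V0.
have [[VV Va] cV] := HV.
have [W [[[WW Wa] cW] Wn0 WV VW Wirr]] := find_irr (ltnSn _) HV Vn0.
set V' := V - W.
have V'V : V' *m V = V' by rewrite /V' mulmxBl VV WV.
have VV' : V *m V' = V' by rewrite /V' mulmxBr VV VW.
have V'W : V' *m W = 0 by rewrite /V' mulmxBl VW WW subrr.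
have HV' : invP V'.
  split; last by apply: commRB.
  split; last by rewrite /V' adjmxB Va Wa.
  by rewrite {1}/V' mulmxBl VV' /V' mulmxBr WV WW subrr subr0.
have V'nV : V' != V.
  apply: contraNneq Wn0 => E; apply/eqP; move: E; rewrite /V' => /eqP.
  by rewrite subr_eq addrC -subr_eq subrr eq_sym => /eqP.
have Hr' : (\rank V' < m)%N.
  by rewrite -ltnS; apply: leq_trans Hr; apply: rank_lt (proj1 HV') V'V VV' V'nV.
have [s [H1 H2 H3 H4]] := IH V' Hr' HV'.
have XW : forall i, (i < size s)%N -> nth 0 s i *m W = 0.
  by move=> i Hi; rewrite -(H3 i Hi) -mulmxA V'W mulmx0.
have WX : forall i, (i < size s)%N -> W *m nth 0 s i = 0.
  move=> i Hi; have [[[_ Xa] _] _] := H1 i Hi.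
  by rewrite -Wa -Xa -adjmxM XW // adjmx0.
exists (W :: s); split.
- by case=> [|i] //= Hi; apply: H1.
- case=> [|i] [|j] //= Hi Hj Hij; first by apply: WX.
    by apply: XW.
  by apply: H2.
- case=> [|i] //= Hi.
  by rewrite -(H3 i Hi) -mulmxA V'V.
- by rewrite big_cons H4 /V' addrC subrK.
Qed.

Hypothesis Hoff : forall W : M, is_orth_proj W -> maps_into Kr W W W W ->
  forall A B : M, Kr (W *m A *m perp W + perp W *m B *m W) = 0.

Lemma bwd : completely_reducible Kr.
Proof.
have H1 : invP 1%:M by split; [split; [rewrite mulmx1 | rewrite adjmx1] | apply: commR1].
have [s [Hs1 Hs2 Hs3 Hs4]] := decomp (ltnSn _) H1.
exists (size s), (fun i => nth 0 s i); split.
- by move=> i; case: (Hs1 i (ltn_ord i)) => [[]].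
- by move=> i j Hij; apply: Hs2 => //.
- by move=> i; case: (Hs1 i (ltn_ord i)) => [[HP cP] _]; apply: comm_inv.
- by move=> i; case: (Hs1 i (ltn_ord i)).
move=> X HX.
have Hd : forall i : 'I_(size s), nth 0 s i *m X *m nth 0 s i = 0.
  move=> i; apply: tr_adj_eq0.
  have [[HP _] _] := Hs1 i (ltn_ord i).
  by rewrite -tr_corner // HX.
have Hsum : \sum_(i < size s) nth 0 s i = 1%:M.
  by rewrite -Hs4 (big_nth 0) big_mkord.
have -> : X = \sum_(i < size s) \sum_(j < size s) nth 0 s i *m X *m nth 0 s j.
  rewrite -[X in X = _]mul1mx -[X in X = _]mulmx1 -{1}Hsum mulmx_suml.
  rewrite -Hsum mulmx_suml; apply: eq_bigr => i _; by rewrite mulmx_sumr.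
rewrite Kr_sum big1 // => i _; rewrite Kr_sum big1 // => j _.
case: (eqVneq i j) => [<-|nij]; first by rewrite Hd Kr0.
have [[HP cP] _] := Hs1 i (ltn_ord i).
have := Hoff HP (comm_inv HP cP) (X *m nth 0 s j) 0.
rewrite mulmx0 mul0mx addr0 /perp mulmxBr mulmx1 -!mulmxA (Hs2 j i) ?mulmx0 ?subr0 //.
by rewrite eq_sym.
Qed.

End Back.

Theorem mainTheorem4 (R : realType) (k : nat) (T : 'M[R[i]]_k -> 'M[R[i]]_k) :
  completely_positive T -> trace_selfadjoint T ->
  (completely_reducible T <->
   (forall W : 'M[R[i]]_k, is_orth_proj W -> maps_into T W W W W ->
      forall A B : 'M[R[i]]_k,
        T (W *m A *m perp W + perp W *m B *m W) = 0)).
Proof.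
move=> [n [Rs TE]] Hsa.
have HT : T = Kr Rs by apply: functional_extensionality => X; rewrite TE.
subst T; split.
- move=> [l [Ws [Hp Ho Hm Hi Hc]]] W HW HmW A B.
  exact: (fwd Hsa Hp Ho Hm Hi Hc).
- exact: bwd.
Qed.
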